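(* Let $\Delta\subset\mathbb{R}^n$ be an $n$-dimensional integral polytope containing the origin and having a unique codimension-1 face $\delta$ not containing the origin, with $\Delta$ the convex hull of $\delta$ and the origin. Let $A=\{V_1,\dots,V_J\}\subset\delta\cap\mathbb{Z}^n$ contain all vertices of $\delta$, let $T=\{\delta_1,\dots,\delta_h\}$ be a regular decomposition of $(\delta,A)$ with associated concave function $\phi$, and let $f=\sum_{j=1}^J a_jx^{V_j}$ with the $a_j$ regarded as indeterminates. If $r\in\Sigma_i$ for some $1\le i\le h$ (and $r$ is a lattice point), then $d(\phi,F_r(f)-F_r(f_{\Sigma_i}))<m(\phi,A;r)$.
   Context: $C(\Delta)$ is the closed cone generated by $\Delta$ and the origin; $w(r)$ is the least $c\ge0$ with $r\in c\Delta$. A regular decomposition of $(\delta,A)$ is a collection of polytopes $\delta_1,\dots,\delta_h$ with vertices in $A$, of full dimension in $\delta$, whose union is $\delta$ and whose pairwise intersections have lower dimension, with a piecewise linear concave $\phi:\delta\to\mathbb{R}$ whose domains of linearity are exactly the $\delta_i$; $\phi$ is extended to $C(\Delta)\setminus\{0\}$ by $\phi(r)=w(r)\phi(r/w(r))$. $\Sigma_i$ is the closed cone generated by $\delta_i$ and the origin, and $f_{\Sigma_i}=\sum_{V_j\in\Sigma_i}a_jx^{V_j}$. $m(\phi,A;r)=\sup\{\sum_j u_j\phi(V_j):\sum_ju_jV_j=r,\ u_j\ge0\}$. Let $\pi$ satisfy $\sum_{m\ge0}\pi^{p^m}/p^m=0$, $\mathrm{ord}_p\pi=1/(p-1)$,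 and let $E(t)=\exp(\sum_{m\ge0}t^{p^m}/p^m)=\sum_m\lambda_mt^m$ be the Artin–Hasse exponential. For $r\in\mathbb{Z}^n$, $F_r(f)=\sum_u\big(\prod_{j=1}^J\lambda_{u_j}a_j^{u_j}\big)\pi^{u_1+\dots+u_J}$, summed over all integral $u=(u_1,\dots,u_J)$ with $u_j\ge0$ and $\sum_ju_jV_j=r$ (and similarly $F_r(f_{\Sigma_i})$ using only the $V_j\in\Sigma_i$). For a polynomial $F=\sum_u\lambda_u\prod_ja_j^{u_j}$, its $\phi$-degree is $d(\phi,F)=\max\{\sum_ju_j\phi(V_j):\lambda_u\neq0\}$, with $d(\phi,0)=-\infty$. *)

(* Defs.v *)
From HB Require Import structures.
From mathcomp Require Import all_boot all_order all_algebra.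
From mathcomp Require Import boolp classical_sets reals constructive_ereal ereal.
Set Implicit Arguments. Unset Strict Implicit. Unset Printing Implicit Defensive.
Import Order.TTheory GRing.Theory Num.Theory.
Local Open Scope classical_set_scope.
Local Open Scope ring_scope.

Section Geometry.
Variables (R : realType) (n : nat).
Local Notation vec := 'rV[R]_n.

Definition dotv (a x : vec) : R := \sum_(k < n) a 0 k * x 0 k.

Definition intvec (x : vec) : Prop := forall k, x 0 k \is a Num.int.

Definition conv (X : set vec) : set vec :=
  [set y | exists (k : nat) (t : 'I_k -> R) (x : 'I_k -> vec),
     (forall l, 0 <= t l /\ X (x l)) /\ \sum_l t l = 1 /\ y = \sum_l t l *: x l].

(* cone generated by X and the origin: all finite nonnegative combinations
   (for the compact convex sets not containing 0 used here it is closed) *)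
Definition cone (X : set vec) : set vec :=
  [set y | exists (k : nat) (t : 'I_k -> R) (x : 'I_k -> vec),
     (forall l, 0 <= t l /\ X (x l)) /\ y = \sum_l t l *: x l].

Definition affdim_ge (X : set vec) (k : nat) : Prop :=
  exists p : 'I_k.+1 -> vec, (forall l, X (p l)) /\
    row_free (\matrix_(l < k) (p (lift ord0 l) - p ord0)).

Definition integral_polytope (D : set vec) : Prop :=
  exists P : seq vec, (forall x, x \in P -> intvec x) /\ D = conv [set x | x \in P].

Definition face_of (D F : set vec) : Prop :=
  exists (l : vec) (c : R), l != 0 /\ (forall x, D x -> dotv l x <= c) /\
    F = [set x | D x /\ dotv l x = c].

Definition facet (D F : set vec) : Prop := face_of D F /\ affdim_ge F n.-1.

(* vertices = extreme points *)
Definition extreme_point (X : set vec) (x : vec) : Prop :=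
  X x /\ forall (y z : vec) (t : R), X y -> X z -> 0 < t < 1 ->
    x = t *: y + (1 - t) *: z -> y = z.

Definition affine_on (phi : vec -> R) (X : set vec) : Prop :=
  exists (a : vec) (b : R), forall x, X x -> phi x = dotv a x + b.

Definition concave_on (phi : vec -> R) (X : set vec) : Prop :=
  forall (x y : vec) (t : R), X x -> X y -> 0 <= t <= 1 ->
    t * phi x + (1 - t) * phi y <= phi (t *: x + (1 - t) *: y).

(* regular decomposition {delta_1..delta_h} of (delta, A), A = {V_1..V_J},
   with concave piecewise linear phi whose domains of linearity are
   exactly the delta_i *)
Definition regular_decomposition (delta : set vec) (J : nat) (V : 'I_J -> vec)
    (h : nat) (deltai : 'I_h -> set vec) (phi : vec -> R) : Prop :=
  (forall i, exists s : seq 'I_J, deltai i = conv [set x | exists j, j \in s /\ x = V j]) /\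
  (forall i, affdim_ge (deltai i) n.-1) /\
  delta = [set x | exists i, deltai i x] /\
  (forall i j, i != j -> ~ affdim_ge (setI (deltai i) (deltai j)) n.-1) /\
  concave_on phi delta /\
  (forall i, affine_on phi (deltai i)) /\
  (forall i j, i != j -> ~ affine_on phi (setU (deltai i) (deltai j))).

End Geometry.

(* Artin--Hasse exponential E(t) = exp(sum_m t^(p^m)/p^m) = sum_m lambda_m t^m
   over Q.  With g(t) = sum_m t^(p^m)/p^m, E is the unique power series with
   E(0) = 1 and E' = g' E, i.e. m lambda_m = sum_{1<=k<=m, k a power of p} lambda_(m-k). *)
Definition is_ppow (p k : nat) : bool := k == (p ^ logn p k)%N.

Fixpoint ah_seq (p m : nat) : seq rat :=
  match m with
  | 0 => [:: 1]
  | m'.+1 => let l := ah_seq p m' in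
      rcons l ((m'.+1)%:R^-1 *
               \sum_(1 <= k < m'.+2 | is_ppow p k) l`_(m'.+1 - k)%N)
  end.

Definition AH_coef (p m : nat) : rat := (ah_seq p m)`_m.

Section Fr.
Variables (R : realType) (n : nat) (K : fieldType) (p : nat) (pi : K).
Variables (J : nat) (V : 'I_J -> 'rV[R]_n).

(* Coefficient of prod_j a_j^(u_j) in F_r(f_S), where f_S = sum over V_j in S
   (S = setT gives F_r(f)).  Polynomials in the indeterminates a_j are
   represented by their coefficient functions on exponent vectors u. *)
Definition Fr_coef (S : set 'rV[R]_n) (r : 'rV[R]_n) (u : 'I_J -> nat) : K :=
  if `[< (forall j, ~ S (V j) -> u j = 0%N) /\ \sum_j (u j)%:R *: V j = r >]
  then (\prod_j ratr (AH_coef p (u j))) * pi ^+ (\sum_j u j)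
  else 0.

(* phi-degree d(phi, F); equals -oo for F = 0 *)
Definition phi_deg (phi : 'rV[R]_n -> R) (F : ('I_J -> nat) -> K) : \bar R :=
  ereal_sup [set x | exists u : 'I_J -> nat,
    F u != 0 /\ x = (\sum_j (u j)%:R * phi (V j))%:E].

Definition m_val (phi : 'rV[R]_n -> R) (r : 'rV[R]_n) : \bar R :=
  ereal_sup [set x | exists u : 'I_J -> R, (forall j, 0 <= u j) /\
    \sum_j u j *: V j = r /\ x = (\sum_j u j * phi (V j))%:E].
End Fr.

(* Main.v *)
Require Import Defs.
From HB Require Import structures.
From mathcomp Require Import all_boot all_order all_algebra.
From mathcomp Require Import boolp classical_sets reals constructive_ereal ereal.
From mathcomp Require Import topology normedtype.
From mathcomp Require Import lra ring.
Import Order.TTheory GRing.Theory Num.Theory.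
Import numFieldNormedType.Exports.
Local Open Scope classical_set_scope.
Local Open Scope ring_scope.
Set Implicit Arguments. Unset Strict Implicit. Unset Printing Implicit Defensive.

Section Lin.
Variables (R : realType) (n : nat).
Local Notation vec := 'rV[R]_n.

Lemma dotv_sum I (r : seq I) (P : pred I) (a : vec) (F : I -> vec) :
  dotv a (\sum_(i <- r | P i) F i) = \sum_(i <- r | P i) dotv a (F i).
Proof.
rewrite /dotv [RHS]exchange_big /=; apply: eq_bigr => k _.
by rewrite summxE mulr_sumr.
Qed.

Lemma dotvD (a x y : vec) : dotv a (x + y) = dotv a x + dotv a y.
Proof. by rewrite /dotv -big_split; apply: eq_bigr => k _; rewrite mxE mulrDr. Qed.

Lemma dotvZ (a x : vec) t : dotv a (t *: x) = t * dotv a x.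
Proof. by rewrite /dotv mulr_sumr; apply: eq_bigr => k _; rewrite mxE mulrCA. Qed.

Lemma dotvN (a x : vec) : dotv a (- x) = - dotv a x.
Proof. by rewrite -scaleN1r dotvZ mulN1r. Qed.

Lemma dotvB (a x y : vec) : dotv a (x - y) = dotv a x - dotv a y.
Proof. by rewrite dotvD dotvN. Qed.

Lemma dotv0 (a : vec) : dotv a 0 = 0.
Proof. by rewrite /dotv big1 // => k _; rewrite mxE mulr0. Qed.

Lemma dotvC (a x : vec) : dotv a x = dotv x a.
Proof. by apply: eq_bigr => k _; rewrite mulrC. Qed.

Lemma dotv_sumZ k (t : 'I_k -> R) (x : 'I_k -> vec) (a : vec) :
  dotv a (\sum_l t l *: x l) = \sum_l t l * dotv a (x l).
Proof. by rewrite dotv_sum; apply: eq_bigr => l _; rewrite dotvZ. Qed.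

Lemma dotvDl (a b x : vec) : dotv (a + b) x = dotv a x + dotv b x.
Proof. by rewrite dotvC dotvD !(dotvC x). Qed.
Lemma dotvZl (a x : vec) t : dotv (t *: a) x = t * dotv a x.
Proof. by rewrite dotvC dotvZ dotvC. Qed.
Lemma dotvNl (a x : vec) : dotv (- a) x = - dotv a x.
Proof. by rewrite dotvC dotvN dotvC. Qed.
Lemma dotvBl (a b x : vec) : dotv (a - b) x = dotv a x - dotv b x.
Proof. by rewrite dotvDl dotvNl. Qed.

Section ConvF.
Variables (m : nat) (W : 'I_m -> vec) (sel : pred 'I_m).

Definition convF (y : vec) : Prop := exists w : 'I_m -> R,
  (forall j, 0 <= w j) /\ (forall j, ~~ sel j -> w j = 0) /\
  \sum_j w j = 1 /\ y = \sum_j w j *: W j.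

Lemma conv_convF y : conv [set x | exists j, sel j /\ x = W j] y -> convF y.
Proof.
move=> [k [t [x [H1 [H2 ->]]]]].
pose jf l := projT1 (cid (H1 l).2).
have jfP l : sel (jf l) /\ x l = W (jf l) := projT2 (cid (H1 l).2).
exists (fun j => \sum_(l | jf l == j) t l); split; [|split; [|split]].
- by move=> j; apply: sumr_ge0 => l _; exact: (H1 l).1.
- move=> j nj; apply: big1 => l /eqP e; have := (jfP l).1.
  by rewrite e (negbTE nj).
- by rewrite -H2 (partition_big jf xpredT) //.
- rewrite (partition_big jf xpredT) //=; apply: eq_bigr => j _.
  rewrite scaler_suml; apply: eq_bigr => l /eqP e.
  by rewrite (jfP l).2 e.
Qed.

Lemma convF_sel y : convF y -> exists j, sel j.
Proof.
move=> [w [_ [H2 [H3 _]]]].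
apply: contrapT => nex.
have : \sum_j w j = 0.
  apply: big1 => j _; apply: H2; apply/negP => sj; apply: nex; by exists j.
by rewrite H3 => /eqP; rewrite oner_eq0.
Qed.

Lemma convF_conv y : convF y -> conv [set x | exists j, sel j /\ x = W j] y.
Proof.
move=> cy; have [j0 sj0] := convF_sel cy.
move: cy => [w [H1 [H2 [H3 ->]]]].
exists m, w, (fun j => if sel j then W j else W j0); split; [|split] => //.
- move=> j; split => //; case: ifP => sj; [by exists j | by exists j0].
- apply: eq_bigr => j _; case: ifP => sj //.
  by rewrite H2 ?sj // !scale0r.
Qed.

Lemma convF_comb k (g : 'I_k -> R) (p : 'I_k -> vec) :
  (forall l, 0 <= g l) -> \sum_l g l = 1 -> (forall l, convF (p l)) ->
  convF (\sum_l g l *: p l).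
Proof.
move=> g0 g1 cp.
pose w l := projT1 (cid (cp l)).
have wP l : (forall j, 0 <= w l j) /\ (forall j, ~~ sel j -> w l j = 0) /\
  \sum_j w l j = 1 /\ p l = \sum_j w l j *: W j := projT2 (cid (cp l)).
exists (fun j => \sum_l g l * w l j); split; [|split; [|split]].
- move=> j; apply: sumr_ge0 => l _; apply: mulr_ge0 => //; exact: (wP l).1.
- move=> j nj; apply: big1 => l _; by rewrite (wP l).2.1 // mulr0.
- rewrite exchange_big /= -g1; apply: eq_bigr => l _.
  by rewrite -mulr_sumr (wP l).2.2.1 mulr1.
- have -> : \sum_l g l *: p l = \sum_l g l *: \sum_j w l j *: W j.
    by apply: eq_bigr => l _; rewrite -(wP l).2.2.2.
  under eq_bigr do rewrite scaler_sumr.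
  rewrite exchange_big /=; apply: eq_bigr => j _.
  rewrite scaler_suml; apply: eq_bigr => l _; by rewrite scalerA.
Qed.

Lemma convF2 (x y : vec) t : 0 <= t <= 1 -> convF x -> convF y ->
  convF (t *: x + (1 - t) *: y).
Proof.
move=> /andP[t0 t1] cx cy.
pose g := fun l : 'I_2 => if l == ord0 then t else 1 - t.
pose p := fun l : 'I_2 => if l == ord0 then x else y.
have H : convF (\sum_l g l *: p l).
  apply: convF_comb.
  - by move=> l; rewrite /g; case: ifP => _ //; rewrite subr_ge0.
  - by rewrite !big_ord_recr big_ord0 /= /g /= add0r addrCA subrr addr0.
  - by move=> l; rewrite /p; case: ifP.
by move: H; rewrite !big_ord_recr big_ord0 /= /g /p /= add0r.
Qed.

End ConvF.
End Lin.

Lemma rowfree_ker (F : fieldType) m k (A : 'M[F]_(m, k)) :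
  (forall u : 'rV_m, u *m A = 0 -> u = 0) -> row_free A.
Proof.
move=> H; rewrite -kermx_eq0; apply/eqP/row_matrixP => i; rewrite row0.
by apply: H; apply/sub_kermxP; exact: row_sub.
Qed.

Section LinAlg.
Variables (R : realType) (n' : nat).
Local Notation n := n'.+1.
Local Notation vec := 'rV[R]_n.

Lemma mulrows k (u : 'rV[R]_k) (p : 'I_k -> vec) :
  u *m (\matrix_l p l) = \sum_l u 0 l *: p l.
Proof. by rewrite mulmx_sum_row; apply: eq_bigr => l _; rewrite rowK. Qed.

Lemma dotv_mx (e x : vec) : dotv e x = (x *m e^T) 0 0.
Proof. by rewrite mxE; apply: eq_bigr => j _; rewrite mxE mulrC. Qed.

Lemma indepH (lv : vec) c (p : 'I_n -> vec) :
  c != 0 -> (forall l, dotv lv (p l) = c) ->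
  row_free (\matrix_(l < n') (p (lift ord0 l) - p ord0)) ->
  (\matrix_l p l) \in unitmx.
Proof.
move=> c0 Hp fD; rewrite -row_free_unit; apply: rowfree_ker => u.
rewrite mulrows => Hs.
have Hsum : \sum_l u 0 l = 0.
  have := congr1 (dotv lv) Hs; rewrite dotv_sumZ dotv0.
  under eq_bigr do rewrite Hp; rewrite -mulr_suml => /eqP.
  by rewrite mulf_eq0 (negbTE c0) orbF => /eqP.
pose v : 'rV[R]_n' := \row_l u 0 (lift ord0 l).
have Hv : v *m (\matrix_(l < n') (p (lift ord0 l) - p ord0)) = 0.
  rewrite mulrows.
  have : \sum_l u 0 l *: (p l - p ord0) = 0.
    under eq_bigr do rewrite scalerBr.
    by rewrite sumrB Hs -scaler_suml Hsum scale0r subrr.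
  rewrite big_ord_recl subrr scaler0 add0r => H; rewrite -[RHS]H.
  by apply: eq_bigr => l _; rewrite mxE.
have v0 : v = 0 by apply/eqP; rewrite -(mulmx_free_eq0 _ fD) Hv.
have ul l : u 0 (lift ord0 l) = 0.
  by have := congr1 (fun w : 'rV_n' => w 0 l) v0; rewrite !mxE.
apply/rowP => l; rewrite mxE.
case: (unliftP ord0 l) => [j ->|->]; first exact: ul.
have Hr : \sum_(j < n') u 0 (lift ord0 j) = 0 by apply: big1 => j _; exact: ul.
by move: Hsum; rewrite big_ord_recl Hr addr0.
Qed.

Lemma unit_dotv0 (p : 'I_n -> vec) (e : vec) :
  (\matrix_l p l) \in unitmx -> (forall l, dotv e (p l) = 0) -> e = 0.
Proof.
move=> U H.
have H0 : (\matrix_l p l) *m e^T = 0.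
  apply/matrixP => l j; rewrite (ord1 j) !mxE -[RHS](H l) dotv_mx mxE.
  by apply: eq_bigr => k _; rewrite !mxE.
have : e^T = 0 by rewrite -(mulKmx U (e^T)) H0 mulmx0.
by move=> /(congr1 trmx); rewrite trmxK trmx0.
Qed.

Lemma unit_decomp (p : 'I_n -> vec) (z : vec) :
  (\matrix_l p l) \in unitmx ->
  exists b : 'I_n -> R, z = \sum_l b l *: p l.
Proof.
move=> U; exists (fun l => (z *m invmx (\matrix_l p l)) 0 l).
by rewrite -mulrows mulmxKV.
Qed.

End LinAlg.

Section Star.
Variables (R : realType) (n' : nat).
Local Notation n := n'.+1.
Local Notation vec := 'rV[R]_n.

Lemma absle_sum k (b : 'I_k -> R) l : `|b l| <= \sum_j `|b j|.
Proof.
by rewrite (bigD1 l) //= lerDl sumr_ge0.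
Qed.

Lemma star (m : nat) (W : 'I_m -> vec) (sel : pred 'I_m) (lv : vec) c
  (p : 'I_n -> vec) : c != 0 -> (forall l, dotv lv (p l) = c) ->
  (\matrix_l p l) \in unitmx -> (forall l, convF W sel (p l)) ->
  forall z, dotv lv z = c -> exists t0, 0 < t0 <= 1 /\
  forall t, 0 <= t <= t0 ->
    convF W sel ((1 - t) *: (\sum_l n%:R^-1 *: p l) + t *: z).
Proof.
move=> c0 Hp U cp z Hz.
have [b Hb] := unit_decomp z U.
have Sb : \sum_l b l = 1.
  have := Hz; rewrite Hb dotv_sumZ; under eq_bigr do rewrite Hp.
  rewrite -mulr_suml => /eqP; rewrite -{2}[c]mul1r.
  by rewrite (inj_eq (mulIf c0)) => /eqP.
set S := \sum_l `|b l|.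
have S0 : 0 <= S by apply: sumr_ge0 => l _.
have nS0 : 0 < 1 + n%:R * S by apply: ltr_pwDl => //; apply: mulr_ge0.
exists (1 + n%:R * S)^-1; split.
  apply/andP; split; first by rewrite invr_gt0.
  by rewrite invf_le1 // lerDl; exact: mulr_ge0.
move=> t /andP[t0 tt0].
have -> : (1 - t) *: (\sum_l n%:R^-1 *: p l) + t *: z =
    \sum_l ((1 - t) * n%:R^-1 + t * b l) *: p l.
  rewrite Hb !scaler_sumr -big_split /=; apply: eq_bigr => l _.
  by rewrite !scalerA scalerDl.
apply: convF_comb => //.
- move=> l.
  have tl : t * (1 + n%:R * S) <= 1 by rewrite -ler_pdivlMr // div1r.
  have N0 : 0 < n%:R :> R by rewrite ltr0n.
  have h1 : `|b l| <= S by exact: absle_sum.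
  have h2 : - (t * `|b l|) <= t * b l.
    by rewrite -mulrN ler_wpM2l // lerNl -normrN ler_norm.
  have h3 : t * `|b l| <= (1 - t) / n%:R.
    rewrite ler_pdivlMr //.
    have : t * `|b l| * n%:R <= t * S * n%:R.
      by rewrite ler_pM2r // ler_wpM2l.
    move: tl; rewrite mulrDr mulr1 => tl H.
    have e : t * (n%:R * S) = t * S * n%:R by rewrite mulrAC mulrA.
    rewrite e in tl; lra.
  move: h2 h3; set q := (1 - t) / n%:R; set A := t * `|b l|; set B := t * b l.
  move=> h2 h3; lra.
- rewrite big_split /= -[\sum_(i < n) t * b i]mulr_sumr Sb mulr1.
  have e : \sum_(i < n) n%:R^-1 = 1 :> R.
    by rewrite sumr_const card_ord -[LHS]mulr_natl mulfV ?pnatr_eq0.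
  by rewrite -mulr_sumr e mulr1 subrK.
Qed.

End Star.

Section ClaimA.
Variables (R : realType) (n' : nat).
Local Notation n := n'.+1.
Local Notation vec := 'rV[R]_n.

Lemma claimA (delta : set vec) (m : nat) (W : 'I_m -> vec) (sel : pred 'I_m)
  (lv : vec) c (p : 'I_n -> vec) (phi : vec -> R) (a : vec) b :
  c != 0 -> (forall l, dotv lv (p l) = c) ->
  (\matrix_l p l) \in unitmx -> (forall l, convF W sel (p l)) ->
  (forall x, convF W sel x -> delta x) ->
  (forall x, convF W sel x -> phi x = dotv a x + b) ->
  concave_on phi delta ->
  forall x, delta x -> dotv lv x = c -> phi x <= dotv a x + b.
Proof.
move=> c0 Hp U cp Pd Pphi cc x dx Hx.
have [t0 [/andP[t00 t01] Ht]] := star c0 Hp U cp Hx.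
set y := \sum_l n%:R^-1 *: p l in Ht.
have Py : convF W sel y.
  by have := Ht 0; rewrite subr0 scale1r scale0r addr0; apply; rewrite lexx ltW.
have Pw : convF W sel ((1 - t0) *: y + t0 *: x) by apply: Ht; rewrite lexx ltW.
have := cc x y t0 dx (Pd _ Py); rewrite (ltW t00) t01 => /(_ isT).
rewrite [t0 *: x + _]addrC (Pphi _ Pw) (Pphi _ Py) dotvD !dotvZ => H.
have : t0 * phi x <= t0 * (dotv a x + b) by lra.
by rewrite ler_pM2l.
Qed.

End ClaimA.

Section Closed.
Variables (R : realType) (n : nat).
Local Notation vec := 'rV[R]_n.

Lemma cont_sum (V : normedModType R) (T : topologicalType) I (r : seq I) (P : pred I)
  (f : I -> T -> V) :
  (forall i, continuous (f i)) -> continuous (fun x => \sum_(i <- r | P i) f i x).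
Proof.
move=> H; elim: r => [|i r IH].
  under eq_fun do rewrite big_nil; exact: cst_continuous.
under eq_fun do rewrite big_cons.
case: (P i) => //.
by move=> x; apply: continuousD; [exact: H | exact: IH].
Qed.

Variables (m : nat) (W : 'I_m -> vec) (sel : pred 'I_m).

Definition Sx : set 'rV[R]_m := [set w | (forall j, 0 <= w 0 j) /\
  (forall j, ~~ sel j -> w 0 j = 0) /\ \sum_j w 0 j = 1].

Definition FW (w : 'rV[R]_m) : vec := \sum_j w 0 j *: W j.

Lemma convF_img x : convF W sel x <-> (FW @` Sx) x.
Proof.
split.
  move=> [w [H1 [H2 [H3 ->]]]]; exists (\row_j w j).
    by split; [|split] => [j|j|]; rewrite ?mxE //; [exact: H2|];
       under eq_bigr do rewrite mxE.
  by apply: eq_bigr => j _; rewrite mxE.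
move=> [w [H1 [H2 H3]] <-]; exists (fun j => w 0 j); split => //.
Qed.

Lemma closed_Sx : closed Sx.
Proof.
have -> : Sx = (\bigcap_(j in setT) ((fun w : 'rV[R]_m => w 0 j) @^-1` [set x | 0 <= x]))
   `&` ((\bigcap_(j in [set j | ~~ sel j]) ((fun w : 'rV[R]_m => w 0 j) @^-1` [set x | x = 0]))
   `&` ((fun w : 'rV[R]_m => \sum_j w 0 j) @^-1` [set x | x = 1])).
  rewrite /Sx; apply/seteqP; split => w /=.
    by move=> [H1 [H2 H3]]; split; [move=> j _; exact: H1|split => // j; exact: H2].
  by move=> [H1 [H2 H3]]; split; [move=> j; exact: H1|split => // j; exact: H2].
apply: closedI; [|apply: closedI].
- apply: closed_bigI => j _; apply: preimage_closed; last exact: closed_ge.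
  by move=> w _; exact: coord_continuous.
- apply: closed_bigI => j _; apply: preimage_closed; last exact: closed_eq.
  by move=> w _; exact: coord_continuous.
- apply: preimage_closed; last exact: closed_eq.
  move=> w _.
  have := @cont_sum R^o _ _ (index_enum 'I_m) xpredT (fun j (w : 'rV[R]_m) => (w 0 j : R^o)).
  move=> /(_ (fun j => @coord_continuous _ _ _ _ _)); apply.
Qed.

Lemma FW_cont : continuous FW.
Proof.
apply: (@cont_sum _ _ _ _ _ (fun j (w : 'rV[R]_m) => w 0 j *: W j)) => j w.
by apply: continuousZr_tmp; exact: coord_continuous.
Qed.

Lemma closed_P : closed (FW @` Sx).
Proof.
apply: compact_closed; first exact: norm_hausdorff.
apply: continuous_compact.
  by apply: continuous_subspaceT; exact: FW_cont.
have Hc := @rV_compact R m (fun=> `[(0 : R), 1]%classic) (fun=> @segment_compact R 0 1).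
apply: subclosed_compact closed_Sx Hc _.
move=> w [H1 [H2 H3]] j /=; rewrite in_itv /= H1 /= -H3.
by rewrite (bigD1 j) //= lerDl sumr_ge0.
Qed.

Lemma convF_open x : ~ convF W sel x ->
  exists e, 0 < e /\ forall z, `|x - z| < e -> ~ convF W sel z.
Proof.
move=> nx.
have op := closed_openC closed_P.
have : nbhs x (~` (FW @` Sx)).
  apply: open_nbhs_nbhs; split => //= H; apply: nx; exact/convF_img.
move=> /nbhs_ballP [e e0 He]; exists e; split => // z xz cz.
have : ball x e z by rewrite -ball_normE.
by move=> /He; apply; apply/convF_img.
Qed.

End Closed.

Section Vand.
Variables (R : realType) (n' : nat).
Local Notation n := n'.+1.
Local Notation vec := 'rV[R]_n.

Lemma vander_unit (g : 'I_n -> nat) : injective g ->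
  (\matrix_(a < n, k < n) ((g a)%:R ^+ k : R)) \in unitmx.
Proof.
move=> gi.
have -> : (\matrix_(a < n, k < n) ((g a)%:R ^+ k : R)) =
          (Vandermonde n (\row_a ((g a)%:R : R)))^T.
  by apply/matrixP => x y; rewrite !mxE.
rewrite unitmxE det_tr det_Vandermonde unitfE.
apply/prodf_neq0 => x _; apply/prodf_neq0 => y xy.
rewrite !mxE subr_eq0 eqr_nat; apply/negP => /eqP /gi e.
by move: xy; rewrite e ltnn.
Qed.

Lemma M0_unit (lv : vec) c (p : 'I_n -> vec) (al : vec) (st : R) :
  c != 0 -> (forall l, dotv lv (p l) = c) -> (\matrix_l p l) \in unitmx ->
  dotv lv al = c -> st != 0 ->
  (\matrix_k (if k == ord0 then al else st *: (p k - p ord0))) \in unitmx.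
Proof.
move=> c0 Hp U Ha st0; rewrite -row_free_unit; apply: rowfree_ker => u.
rewrite mulrows big_ord_recl /= => Hs.
have Hr : \sum_(k < n') u 0 (lift ord0 k) *: (st *: (p (lift ord0 k) - p ord0))
   = \sum_(k < n) (u 0 k * st * (k != ord0)%:R) *: (p k - p ord0).
  rewrite big_ord_recl /= mulr0 scale0r add0r; apply: eq_bigr => k _.
  by rewrite scalerA mulr1.
rewrite Hr in Hs.
have u0 : u 0 ord0 = 0.
  have := congr1 (dotv lv) Hs; rewrite dotvD dotvZ dotv_sum dotv0 Ha.
  under eq_bigr do rewrite dotvZ dotvB !Hp subrr mulr0.
  rewrite big1 // addr0 => /eqP; rewrite mulf_eq0 (negbTE c0) orbF => /eqP //.
rewrite u0 scale0r add0r in Hs.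
pose v : 'rV[R]_n := \row_k (u 0 k * st * (k != ord0)%:R
   - (k == ord0)%:R * \sum_(k' < n) u 0 k' * st * (k' != ord0)%:R).
set S := \sum_(k' < n) u 0 k' * st * (k' != ord0)%:R in v.
have v0 : v = 0.
  have : v *m (\matrix_l p l) = 0.
    rewrite mulrows -[RHS]Hs.
    under eq_bigr do rewrite mxE scalerBl.
    rewrite sumrB; under [X in _ - X = _]eq_bigr do rewrite -scalerA.
    rewrite [X in _ - X = _]big_ord_recl /= scale1r.
    rewrite [X in _ - (_ + X) = _]big1 ?addr0; last by move=> k _; rewrite scale0r.
    under [RHS]eq_bigr do rewrite scalerBr.
    by rewrite sumrB -scaler_suml.
  by move=> H; rewrite -(mulmxK U v) H mul0mx.
apply/rowP => k; rewrite mxE.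
have [->|nk] := eqVneq k ord0; first exact: u0.
have := congr1 (fun w : 'rV_n => w 0 k) v0; rewrite !mxE nk /= (negbTE nk) mul0r subr0 mulr1.
by move/eqP; rewrite mulf_eq0 (negbTE st0) orbF => /eqP.
Qed.
End Vand.

Lemma pigeon (N h n : nat) (f : 'I_N -> 'I_h) : (h * n < N)%N ->
  exists k (g : 'I_n.+1 -> 'I_N), injective g /\ forall a, f (g a) = k.
Proof.
move=> hN.
have [k Hk] : exists k, (n < #|[pred s | f s == k]|)%N.
  apply: contrapT => nk.
  have H : forall k, (#|[pred s | f s == k]| <= n)%N.
    by move=> k; rewrite leqNgt; apply/negP => H; apply: nk; exists k.
  have : (N <= h * n)%N.
    rewrite -{1}(card_ord N) -sum1_card (partition_big f xpredT) //=.
    apply: (@leq_trans (\sum_(k < h) n)); last by rewrite sum_nat_const card_ord.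
    apply: leq_sum => k _.
    by rewrite sum1_card; exact: (H k).
  by rewrite leqNgt hN.
exists k, (fun a => enum_val (widen_ord Hk a)); split.
  move=> x y /enum_val_inj /(congr1 val) /= e; exact: val_inj.
move=> a; have := enum_valP (widen_ord Hk a); rewrite inE => /eqP //.
Qed.

Lemma inv_bound (R : realType) k (f : 'I_k -> R) : (forall s, 0 < f s) ->
  0 < (1 + \sum_s (f s)^-1)^-1 /\ (1 + \sum_s (f s)^-1)^-1 <= 1 /\
  forall s, (1 + \sum_s (f s)^-1)^-1 <= f s.
Proof.
move=> fp.
have S0 : 0 <= \sum_s (f s)^-1 by apply: sumr_ge0 => s _; rewrite invr_ge0 ltW.
have X0 : 0 < 1 + \sum_s (f s)^-1 by lra.
split; first by rewrite invr_gt0.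
split; first by rewrite invf_le1 //; lra.
move=> s; rewrite -[X in _ <= X](invrK (f s)) lef_pV2 ?posrE ?invr_gt0 //.
rewrite (bigD1 s) //= addrCA lerDl; apply: addr_ge0 => //.
by apply: sumr_ge0 => s' _; rewrite invr_ge0 ltW.
Qed.

Section ClaimB.
Variables (R : realType) (n' : nat).
Local Notation n := n'.+1.
Local Notation vec := 'rV[R]_n.
Variables (m : nat) (W : 'I_m -> vec) (sel : pred 'I_m) (lv : vec) (c : R)
  (p : 'I_n -> vec) (delta : set vec) (phi : vec -> R) (a : vec) (b : R)
  (h : nat) (D : 'I_h -> set vec) (i : 'I_h).
Hypotheses (c0 : c != 0) (Hp : forall l, dotv lv (p l) = c)
  (U : (\matrix_l p l) \in unitmx) (cp : forall l, convF W sel (p l))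
  (Pd : forall x, convF W sel x -> delta x)
  (Pphi : forall x, convF W sel x -> phi x = dotv a x + b)
  (cc : concave_on phi delta) (dH : forall x, delta x -> dotv lv x = c)
  (dconv : forall x y t, delta x -> delta y -> 0 <= t <= 1 ->
     delta (t *: x + (1 - t) *: y))
  (cover : forall x, delta x -> exists k, D k x)
  (Di : forall x, D i x <-> convF W sel x)
  (Daff : forall k, affine_on phi (D k))
  (Dsub : forall k x, D k x -> delta x)
  (nonaff : forall k, k != i -> ~ affine_on phi (D i `|` D k)).

Lemma claimB x : delta x -> phi x = dotv a x + b -> convF W sel x.
Proof.
move=> dx phix; apply: contrapT => nx.
have [e [e0 He]] := convF_open nx.
set y := \sum_l n%:R^-1 *: p l.
pose N := (h * n').+1.
pose q (s : 'I_N) := y + \sum_(k < n) (((s : nat)%:R : R) ^+ k) *: (p k - p ord0).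
have Hy : dotv lv y = c.
  rewrite /y dotv_sumZ; under eq_bigr do rewrite Hp.
  by rewrite -mulr_suml sumr_const card_ord -[_ *+ _]mulr_natl mulfV ?mul1r ?pnatr_eq0.
have Hq s : dotv lv (q s) = c.
  rewrite /q dotvD Hy dotv_sumZ big1 ?addr0 // => k _.
  by rewrite dotvB !Hp subrr mulr0.
have tf s := cid (star c0 Hp U cp (Hq s)).
pose tt s := projT1 (tf s).
have ttP s : 0 < tt s <= 1 /\ forall t, 0 <= t <= tt s ->
    convF W sel ((1 - t) *: y + t *: q s) := projT2 (tf s).
have [t0 [t1 tle]] := @inv_bound R N tt (fun s => (andP (ttP s).1).1).
set t := (1 + \sum_s (tt s)^-1)^-1 in t0 t1 tle.
pose v s := (1 - t) *: y + t *: q s.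
have Pv s : convF W sel (v s) by apply: (ttP s).2; rewrite ltW // tle.
pose ff s := e / (2 * (1 + `|x - v s|)).
have ffp s : 0 < ff s.
  by rewrite /ff divr_gt0 // mulr_gt0 // ltr_pwDl.
have [s0 [s1 sle]] := @inv_bound R N ff ffp.
set s := (1 + \sum_s (ff s)^-1)^-1 in s0 s1 sle.
pose w r := s *: v r + (1 - s) *: x.
have dw r : delta (w r) by apply: dconv => //; [exact: Pd | rewrite ltW].
have nw r : ~ convF W sel (w r).
  apply: He; rewrite /w.
  have -> : x - (s *: v r + (1 - s) *: x) = s *: (x - v r).
    rewrite scalerBr scalerBl scale1r opprD opprB addrCA addrA addrC.
    by rewrite [- (s *: v r) + x]addrC addrA subrK.
  rewrite normrZ ger0_norm ?(ltW s0) //.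
  apply: le_lt_trans (ler_wpM2r (normr_ge0 _) (sle r)) _.
  rewrite /ff mulrAC ltr_pdivrMr ?mulr_gt0 ?ltr_pwDl // ltr_pM2l //.
  have := normr_ge0 (x - v r); lra.
have phiw r : phi (w r) = dotv a (w r) + b.
  apply/eqP; rewrite eq_le; apply/andP; split.
    exact: (claimA c0 Hp U cp Pd Pphi cc (dw r) (dH (dw r))).
  have := cc (Pd (Pv r)) dx (_ : 0 <= s <= 1); rewrite ltW // s1 => /(_ isT).
  rewrite (Pphi (Pv r)) phix /w /v !(dotvD, dotvZ); lra.
have kf r := cid (cover (dw r)).
pose kk r := projT1 (kf r).
have kkP r : D (kk r) (w r) := projT2 (kf r).
have kki r : kk r != i.
  apply/eqP => e1; apply: (nw r); apply/Di; rewrite -e1; exact: kkP.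
have [k [g [ginj gk]]] := @pigeon N h n' kk (ltnSn _).
have [ak [bk Hk]] := Daff k.
pose e' := (a - ak) + ((b - bk) / c) *: lv.
have He' : e' = 0.
  pose al := s *: y + (1 - s) *: x.
  pose M0 := \matrix_(k0 < n) (if k0 == ord0 then al else (s * t) *: (p k0 - p ord0)).
  pose Am := \matrix_(a0 < n, k0 < n) ((g a0 : nat)%:R ^+ k0 : R).
  have wE r : w r = al + (s * t) *: \sum_(k0 < n) (((r : nat)%:R : R) ^+ k0) *: (p k0 - p ord0).
    rewrite /w /v /q /al !scalerDr !scalerA addrA -scalerDl mulrBr mulr1 subrK.
    by rewrite addrAC.
  have Meq : \matrix_a0 w (g a0) = Am *m M0.
    apply/row_matrixP => a0; rewrite rowK row_mul mulmx_sum_row wE /M0 /Am.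
    rewrite [RHS]big_ord_recl !rowK /= !mxE expr0 scale1r; congr (_ + _).
    rewrite scaler_sumr big_ord_recl subrr scaler0 scaler0 /= add0r.
    by apply: eq_bigr => k0 _; rewrite rowK !mxE /= !scalerA mulrC.
  have MU : (\matrix_a0 w (g a0)) \in unitmx.
    rewrite Meq unitmx_mul; apply/andP; split.
      apply: (@vander_unit R n' (fun a0 => (g a0 : nat))).
      by move=> x1 x2 /val_inj /ginj.
    apply: (@M0_unit R n' lv c p) => //.
      by rewrite /al dotvD !dotvZ Hy (dH dx); lra.
    by rewrite mulf_neq0 // gt_eqF.
  apply: (unit_dotv0 MU) => a0.
  have Hk' := Hk _ (eq_ind _ (fun k1 => D k1 (w (g a0))) (kkP (g a0)) _ (gk a0)).
  rewrite /e' dotvDl dotvBl dotvZl (dH (dw _)) mulfVK //.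
  have := phiw (g a0); rewrite Hk'; lra.
apply: (nonaff (k := k)).
  by rewrite -(gk ord0) kki.
exists a, b => z [zi|zk].
  by apply: Pphi; apply/Di.
rewrite Hk //.
have := congr1 (fun u => dotv u z) He'.
have d0 : dotv 0 z = 0 by rewrite dotvC dotv0.
rewrite d0 /e' dotvDl dotvBl dotvZl (dH (Dsub zk)) mulfVK //.
move=> H; lra.
Qed.

End ClaimB.

Lemma convF_pt (R : realType) n m (W : 'I_m -> 'rV[R]_n) (sel : pred 'I_m) j :
  sel j -> convF W sel (W j).
Proof.
move=> sj; exists (fun k => (k == j)%:R); split; [|split; [|split]].
- by move=> k; rewrite ler0n.
- by move=> k nk; case: eqVneq => // e; move: nk; rewrite e sj.
- by rewrite (bigD1 j) //= eqxx big1 ?addr0 // => k /negbTE ->.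
- rewrite (bigD1 j) //= eqxx scale1r big1 ?addr0 // => k /negbTE ->.
  by rewrite scale0r.
Qed.

Lemma conv_seq (R : realType) n (P0 : seq 'rV[R]_n) :
  conv [set x | x \in P0] =
  convF (fun j : 'I_(size P0) => nth 0 P0 j) xpredT.
Proof.
have -> : [set x | x \in P0] =
    [set x | exists j : 'I_(size P0), xpredT j /\ x = nth 0 P0 j].
  apply/seteqP; split => x /=.
    move=> xP; have ix : (index x P0 < size P0)%N by rewrite index_mem.
    by exists (Ordinal ix); split => //=; rewrite nth_index.
  by move=> [j [_ ->]]; exact: mem_nth.
apply/seteqP; split => x; [exact: conv_convF | exact: convF_conv].
Qed.

Theorem mainTheorem4 (R : realType) (n : nat) (p : nat) (K : fieldType) (pi : K)
    (Delta delta : set 'rV[R]_n) (J : nat) (V : 'I_J -> 'rV[R]_n)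
    (h : nat) (deltai : 'I_h -> set 'rV[R]_n) (phi : 'rV[R]_n -> R)
    (i : 'I_h) (r : 'rV[R]_n) :
  prime p -> [pchar K] =i pred0 -> pi != 0 ->
  integral_polytope Delta -> affdim_ge Delta n -> Delta 0 ->
  facet Delta delta -> ~ delta 0 ->
  (forall F, facet Delta F -> ~ F 0 -> F = delta) ->
  Delta = conv (delta `|` [set 0]) ->
  injective V -> (forall j, delta (V j) /\ intvec (V j)) ->
  (forall x, extreme_point delta x -> exists j, V j = x) ->
  regular_decomposition delta V deltai phi ->
  intvec r -> cone (deltai i) r ->
  (phi_deg V phi (fun u => (Fr_coef p pi V setT r u - Fr_coef p pi V (cone (deltai i)) r u)%R)
     < m_val V phi r)%E.
Proof.
move=> _ _ _ [P0 [_ DeqP0]] _ D0 [[lv [c [lv0 [Hle deq]]]] _] nd0 _ _ _ Vd _ RD _ coner.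
destruct n as [|n'].
  by move: lv0; rewrite (thinmx0 lv) eqxx.
have dH x : delta x -> dotv lv x = c by rewrite deq => -[].
have c0 : c != 0.
  apply/eqP => c0; apply: nd0; rewrite deq; split => //.
  by rewrite dotv0 c0.
have Dconv x y t : Delta x -> Delta y -> 0 <= t <= 1 -> Delta (t *: x + (1 - t) *: y).
  by rewrite DeqP0 conv_seq => ? ? ?; exact: convF2.
have dconv x y t : delta x -> delta y -> 0 <= t <= 1 -> delta (t *: x + (1 - t) *: y).
  rewrite deq => -[Dx Hx] [Dy Hy] t01; split; first exact: Dconv.
  by rewrite dotvD !dotvZ Hx Hy; lra.
move: RD => [Hs [Hdim [Hcov [_ [Hcc [Haff Hnon]]]]]].
have [si Hsi] := Hs i.
have Di x : deltai i x <-> convF V (fun j => j \in si) x.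
  by rewrite Hsi; split; [exact: conv_convF | exact: convF_conv].
have [pp [ppD ppF]] := Hdim i.
have Pd x : convF V (fun j => j \in si) x -> delta x.
  by move=> /Di Dx; rewrite Hcov; exists i.
have Hp l : dotv lv (pp l) = c by apply: dH; apply: Pd; apply/Di.
have U : (\matrix_l pp l) \in unitmx by apply: (indepH c0 Hp).
have [a [b Hab]] := Haff i.
have cpp l : convF V (fun j => j \in si) (pp l) by apply/Di.
have Pphi x : convF V (fun j => j \in si) x -> phi x = dotv a x + b.
  by move=> /Di; exact: Hab.
have cover x : delta x -> exists k, deltai k x by rewrite {1}Hcov.
have Dsub k x : deltai k x -> delta x by move=> Dx; rewrite Hcov; exists k.
have nonaff k : k != i -> ~ affine_on phi (deltai i `|` deltai k).
  by move=> ki; apply: Hnon; rewrite eq_sym.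
have cA x : delta x -> phi x <= dotv a x + b.
  move=> dx; exact: (claimA c0 Hp U cpp Pd Pphi Hcc dx (dH _ dx)).
have cB := @claimB R n' J V (fun j => j \in si) lv c pp delta phi a b h deltai i
  c0 Hp U cpp Pd Pphi Hcc dH dconv cover Di Haff Dsub nonaff.
pose gp j := dotv a (V j) + b - phi (V j).
have gp0 j : 0 <= gp j by rewrite subr_ge0; apply: cA; exact: (Vd j).1.
have gpP j : ~ cone (deltai i) (V j) -> 0 < gp j.
  move=> nc; rewrite lt_def gp0 andbT; apply/negP => /eqP g0; apply: nc.
  have /Di Dj : convF V (fun j => j \in si) (V j).
    by apply: cB; [exact: (Vd j).1 | move: g0; rewrite /gp; lra].
  exists 1%N, (fun _ => 1), (fun _ => V j); split => //.
  by rewrite big_ord1 scale1r.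
pose f j := if pselect (cone (deltai i) (V j)) then 1 else gp j.
have fp j : 0 < f j by rewrite /f; case: pselect => // nc; exact: gpP.
have [g0 [_ gle]] := @inv_bound R J f fp.
set g := (1 + \sum_s (f s)^-1)^-1 in g0 gle.
pose L := dotv a r + b * (dotv lv r / c).
have mL : (L%:E <= m_val V phi r)%E.
  apply: ereal_sup_ubound.
  move: coner => [k [t [x [Hx Hr]]]].
  have cw l : convF V (fun j => j \in si) (x l) by apply/Di; exact: (Hx l).2.
  pose wl l := projT1 (cid (cw l)).
  have wlP l : (forall j, 0 <= wl l j) /\ (forall j, ~~ (j \in si) -> wl l j = 0) /\
    \sum_j wl l j = 1 /\ x l = \sum_j wl l j *: V j := projT2 (cid (cw l)).
  exists (fun j => \sum_l t l * wl l j); split; [|split].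
  - move=> j; apply: sumr_ge0 => l _; apply: mulr_ge0; [exact: (Hx l).1 | exact: (wlP l).1].
  - rewrite Hr; under eq_bigr do rewrite scaler_suml.
    rewrite exchange_big /=; apply: eq_bigr => l _.
    rewrite (wlP l).2.2.2 scaler_sumr; apply: eq_bigr => j _; by rewrite scalerA.
  - have e1 l : \sum_j wl l j * phi (V j) = dotv a (x l) + b.
      rewrite (wlP l).2.2.2 dotv_sumZ -[X in _ + X]mul1r -(wlP l).2.2.1 mulr_suml.
      rewrite -big_split /=; apply: eq_bigr => j _.
      case sj: (j \in si).
        by rewrite (Pphi _ (convF_pt V sj)) mulrDr.
      by rewrite (wlP l).2.1 ?sj // !mul0r addr0.
    have e2 : \sum_j (\sum_l t l * wl l j) * phi (V j) = \sum_l t l * (dotv a (x l) + b).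
      under eq_bigr do rewrite mulr_suml.
      rewrite exchange_big /=; apply: eq_bigr => l _.
      by rewrite -e1 mulr_sumr; apply: eq_bigr => j _; rewrite mulrA.
    rewrite e2 /L Hr !dotv_sumZ.
    have e3 : \sum_l t l * dotv lv (x l) = \sum_l t l * c.
      by apply: eq_bigr => l _; rewrite (dH _ (Pd _ (cw l))).
    rewrite e3 -mulr_suml mulfK // mulr_sumr -big_split /=.
    by congr (EFin _); apply: eq_bigr => l _; rewrite mulrDr [b * _]mulrC.
have dL : (phi_deg V phi (fun u => (Fr_coef p pi V setT r u -
    Fr_coef p pi V (cone (deltai i)) r u)%R) <= (L - g)%:E)%E.
  apply: ge_ereal_sup => _ [u [Fu ->]]; rewrite lee_fin.
  move: Fu; rewrite /Fr_coef.
  case: asboolP => [[_ Hsum]|nA]; last first.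
    case: asboolP => [[_ Hsum]|_]; last by rewrite subrr eqxx.
    by exfalso; apply: nA; split => // j /(_ I).
  case: asboolP => [_|nB]; first by rewrite subrr eqxx.
  move=> _.
  have [j0 [nc uj0]] : exists j0, ~ cone (deltai i) (V j0) /\ u j0 <> 0%N.
    apply: contrapT => nex; apply: nB; split => // j ncj.
    by apply: contrapT => uj; apply: nex; exists j.
  have E1 : \sum_j (u j)%:R * phi (V j) =
      (dotv a r + b * \sum_j (u j)%:R) - \sum_j (u j)%:R * gp j.
    rewrite -Hsum dotv_sumZ mulr_sumr -big_split -sumrB /=.
    by apply: eq_bigr => j _; rewrite /gp; ring.
  have E2 : \sum_j (u j)%:R = dotv lv r / c.
    have e4 : \sum_j (u j)%:R * dotv lv (V j) = \sum_j (u j)%:R * c.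
      by apply: eq_bigr => j _; rewrite (dH _ (Vd j).1).
    by rewrite -Hsum dotv_sumZ e4 -mulr_suml mulfK.
  have E3 : g <= \sum_j (u j)%:R * gp j.
    rewrite (bigD1 j0) //=.
    have r0 : 0 <= \sum_(j | j != j0) (u j)%:R * gp j.
      by apply: sumr_ge0 => j _; apply: mulr_ge0.
    have u1 : 1 <= (u j0)%:R :> R by rewrite ler1n lt0n; apply/eqP.
    have fj : f j0 = gp j0 by rewrite /f; case: pselect.
    have := gle j0; rewrite fj => gg.
    have := gp0 j0 => gg0.
    have : gp j0 <= (u j0)%:R * gp j0 by rewrite ler_peMl.
    lra.
  rewrite E1 E2 /L; lra.
apply: le_lt_trans dL _; apply: lt_le_trans mL; rewrite lte_fin; lra.
Qed.
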